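(* Let $0\le\alpha<\pi/2$ and let $H\in\mathbb{M}_n(\mathbb{M}_k)$ satisfy $W(H)\subseteq S_\alpha$. Then \[ \left|\frac{\det(\mathrm{tr}_1 H)}{n^k}\right|^n \ge (\cos\alpha)^{nk}\,|\det H|. \]
   Context: $\mathbb{M}_n(\mathbb{M}_k)$ denotes the set of $nk\times nk$ complex matrices partitioned as $H=[H_{i,j}]_{i,j=1}^n$ with each block $H_{i,j}$ a $k\times k$ complex matrix. The first partial trace is $\mathrm{tr}_1 H=\sum_{i=1}^n H_{i,i}\in\mathbb{M}_k$. The numerical range of $A\in\mathbb{M}_p$ is $W(A)=\{x^*Ax: x\in\mathbb{C}^p, x^*x=1\}$. For $\alpha\in[0,\pi/2)$, $S_\alpha=\{z\in\mathbb{C}: \Re z>0,\ |\Im z|\le (\Re z)\tan\alpha\}$. *)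

(* Defs.v *)
(* Complex matrices are taken over an arbitrary
   numClosedFieldType C (algebraically closed field with conjugation,
   e.g. the complex numbers). *)
From HB Require Import structures.
From mathcomp Require Import all_boot all_order all_algebra.
Set Implicit Arguments. Unset Strict Implicit. Unset Printing Implicit Defensive.
Import Order.TTheory GRing.Theory Num.Theory.
Local Open Scope ring_scope.

Lemma blk_proof (n k : nat) (i : 'I_n) (a : 'I_k) : (i * k + a < n * k)%N.
Proof.
have hi := ltn_ord i; have ha := ltn_ord a.
apply: (@leq_trans (i * k + k)%N); first by rewrite ltn_add2l.
by rewrite addnC -mulSn leq_mul2r hi orbT.
Qed.

(* index of entry (a) of block (i) in the flat 'I_(n*k) indexing:
   block i occupies rows/columns i*k, ..., i*k + k - 1 *)
Definition blk (n k : nat) (i : 'I_n) (a : 'I_k) : 'I_(n * k) :=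
  Ordinal (blk_proof i a).

Definition ptrace1 (C : numClosedFieldType) (n k : nat) (H : 'M[C]_(n * k))
  : 'M[C]_k :=
  \matrix_(a < k, b < k) \sum_(i < n) H (blk i a) (blk i b).

Definition adjmx (C : numClosedFieldType) (p q : nat) (A : 'M[C]_(p, q))
  : 'M[C]_(q, p) := (map_mx Num.conj A)^T.

Definition numrange (C : numClosedFieldType) (p : nat) (A : 'M[C]_p)
  : C -> Prop :=
  fun z => exists x : 'cV[C]_p,
    adjmx x *m x = 1%:M /\ z = (adjmx x *m A *m x) ord0 ord0.

(* sector S_alpha, with alpha in [0, pi/2) encoded by c = cos alpha,
   s = sin alpha:  Re z > 0 and |Im z| <= (Re z) tan alpha,
   i.e. |Im z| * c <= (Re z) * s. *)
Definition sector (C : numClosedFieldType) (c s : C) (z : C) : Prop :=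
  0 < 'Re z /\ `|'Im z| * c <= 'Re z * s.

(* (c, s) = (cos alpha, sin alpha) for some alpha in [0, pi/2) *)
Definition angle_cs (C : numClosedFieldType) (c s : C) : Prop :=
  c \is Num.real /\ s \is Num.real /\ 0 < c /\ 0 <= s /\ c ^+ 2 + s ^+ 2 = 1.

(* Main.v *)
Require Import Defs.
From HB Require Import structures.
From mathcomp Require Import all_boot all_order all_algebra.
From mathcomp Require Import ring.
Import Order.TTheory GRing.Theory Num.Theory.
Local Open Scope ring_scope.

Set Implicit Arguments. Unset Strict Implicit. Unset Printing Implicit Defensive.

Lemma eig_decomp (C : numClosedFieldType) m (M : 'M[C]_m) :
  exists d : 'I_m -> C, [/\ \det M = \prod_i d i, \tr M = \sum_i d i &
     forall i, eigenvalue M (d i)].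
Proof.
case: m M => [|m] M.
  exists (fun _ => 0); split; last by case.
    by rewrite det_mx00 big_ord0.
  by rewrite /mxtrace !big_ord0.
have [P Pu Ptrig] := Schur M (ltn0Sn m).
have Punit := unitarymx_unit Pu.
have TE : conjmx P M = P *m M *m invmx P by rewrite conjumx.
exists (fun i => conjmx P M i i); split.
- rewrite -det_trig // TE !det_mulmx mulrAC -det_mulmx mulmxV // det1 mul1r.
  done.
- transitivity (\tr (conjmx P M)) => //.
  by rewrite TE mxtrace_mulC mulmxA mulVmx // mul1mx.
- move=> i; apply: (eigenvalue_conjmx (V:=P)).
  + by rewrite stablemx_unit.
  + by rewrite row_free_unit.
  change (eigenvalue (conjmx P M) (conjmx P M i i)).
  rewrite eigenvalue_root_char char_poly_trig //.
  apply/rootP; rewrite horner_prod; apply/eqP; rewrite prodf_seq_eq0.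
  by apply/hasP; exists i; rewrite ?mem_index_enum //= hornerXsubC subrr.
Qed.


Section Sector.
Variables (C : numClosedFieldType) (c s : C).
Hypothesis hcs : angle_cs c s.

Lemma sector_scale z r : sector c s z -> 0 < r -> sector c s (r * z).
Proof.
move=> [h1 h2] r0; have rR : r \is Num.real by rewrite gtr0_real.
split; first by rewrite ReMl // mulr_gt0.
rewrite ReMl // ImMl // normrM (gtr0_norm r0) -!mulrA ler_pM2l //.
Qed.

Lemma sector_add z w : sector c s z -> sector c s w -> sector c s (z + w).
Proof.
move=> [h1 h2] [h3 h4]; have [_ [_ [c0 [s0 _]]]] := hcs.
split; first by rewrite raddfD addr_gt0.
rewrite !raddfD mulrDl; apply: le_trans (lerD h2 h4).
rewrite -mulrDl; apply: ler_wpM2r; [exact: ltW | exact: ler_normD].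
Qed.

Lemma sector_norm z : sector c s z -> c * `|z| <= 'Re z.
Proof.
move=> [h1 h2]; have [cR [sR [c0 [s0 e]]]] := hcs.
have RR := Creal_Re z; have IR := Creal_Im z.
rewrite -(@ler_pXn2r _ 2) //; first last.
- by rewrite nnegrE ltW.
- by rewrite nnegrE mulr_ge0 // ltW.
rewrite exprMn normC2_Re_Im mulrDr.
have : ('Im z) ^+ 2 * c ^+ 2 <= ('Re z) ^+ 2 * s ^+ 2.
  rewrite -real_normK // -!exprMn ler_pXn2r // nnegrE mulr_ge0 // ltW //.
have -> : ('Re z) ^+ 2 * s ^+ 2 = ('Re z) ^+ 2 - c ^+ 2 * ('Re z) ^+ 2.
  by rewrite -[X in X - _]mulr1 -e; ring.
by move=> h; rewrite -lerBrDl mulrC.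
Qed.


Lemma sector_sum m (F : 'I_m -> C) :
  (0 < m)%N -> (forall j, sector c s (F j)) -> sector c s (\sum_j F j).
Proof.
case: m F => // m F _; elim: m F => [|m IH] F h; first by rewrite big_ord1.
by rewrite big_ord_recr; apply: sector_add => //; apply: IH.
Qed.

End Sector.


Section QF.
Variable C : numClosedFieldType.

Definition qf m (M : 'M[C]_m) (u : 'rV[C]_m) : C := (u *m M *m adjmx u) ord0 ord0.

Lemma qfE m (M : 'M[C]_m) u :
  qf M u = \sum_i \sum_j u ord0 i * M i j * (u ord0 j)^*.
Proof.
rewrite /qf mxE exchange_big /=; apply: eq_bigr => j _.
by rewrite !mxE big_distrl /=; apply: eq_bigr => i _.
Qed.

Lemma qf_eig m (M D : 'M[C]_m) u a :
  u *m M = a *: (u *m D) -> qf M u = a * qf D u.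
Proof. by rewrite /qf => ->; rewrite -scalemxAl mxE. Qed.

Lemma adjmxZ m n a (A : 'M[C]_(m, n)) : adjmx (a *: A) = a^* *: adjmx A.
Proof. by apply/matrixP => i j; rewrite !mxE rmorphM. Qed.

Lemma adjmxK m n (A : 'M[C]_(m, n)) : adjmx (adjmx A) = A.
Proof. by apply/matrixP => i j; rewrite !mxE conjCK. Qed.

Lemma qf1_gt0 m (u : 'rV[C]_m) : u != 0 -> 0 < qf 1%:M u.
Proof.
move=> u0; rewrite /qf mulmx1 mxE.
have ge0 : forall j : 'I_m, 0 <= u ord0 j * adjmx u j ord0.
  by move=> j; rewrite !mxE mul_conjC_ge0.
rewrite lt_def (sumr_ge0 _ (fun j _ => ge0 j)) andbT.
rewrite psumr_eq0; last by move=> j _; apply: ge0.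
apply: contra u0 => /allP h; apply/eqP/rowP => j; rewrite mxE.
have /implyP := h j (mem_index_enum j); move=> /(_ isT).
by rewrite !mxE mul_conjC_eq0 => /eqP ->.
Qed.

Lemma qf_numrange m (M : 'M[C]_m) (P : C -> Prop) u :
  (forall z, numrange M z -> P z) -> u != 0 ->
  exists2 r, 0 < r & P (r * qf M u).
Proof.
move=> hW u0; have r0 := qf1_gt0 u0; set r := qf 1%:M u in r0.
have sq0 : 0 < sqrtC r by rewrite sqrtC_gt0.
have sqR : sqrtC r \is Num.real by rewrite gtr0_real.
exists (r^-1); first by rewrite invr_gt0.
set x := (sqrtC r)^-1 *: adjmx u.
have ax : adjmx x = (sqrtC r)^-1 *: u.
  rewrite adjmxZ adjmxK; congr (_ *: _). rewrite fmorphV; congr (_^-1); exact: conj_Creal.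
apply: hW; exists x; split.
  rewrite ax -scalemxAl -scalemxAr scalerA -expr2 exprVn sqrtCK.
  apply/matrixP => i j; rewrite !ord1 [X in X = _]mxE [X in _ = X]mxE eqxx mulr1n.
  move: (gt_eqF r0); rewrite /r /qf mulmx1 => h.
  by rewrite mulVf // h.
rewrite ax -scalemxAl /x -!scalemxAr -scalemxAl scalerA -expr2 exprVn sqrtCK mxE.
by rewrite /qf.
Qed.


Lemma qfZ m a (M : 'M[C]_m) u : qf (a *: M) u = a * qf M u.
Proof. by rewrite /qf -scalemxAr -scalemxAl mxE. Qed.

Lemma qfD m (M M' : 'M[C]_m) u : qf (M + M') u = qf M u + qf M' u.
Proof. by rewrite /qf mulmxDr mulmxDl mxE. Qed.

Lemma qf0 m (M : 'M[C]_m) : qf M 0 = 0.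
Proof. by rewrite /qf !mul0mx mxE. Qed.

Lemma qf_adj m (M : 'M[C]_m) u : qf (adjmx M) u = (qf M u)^*.
Proof.
rewrite !qfE rmorph_sum exchange_big; apply: eq_bigr => i _.
rewrite rmorph_sum; apply: eq_bigr => j _.
by rewrite !mxE !rmorphM /= conjCK; ring.
Qed.

End QF.


Section Blk.
Variables (n k : nat).
Hypothesis k0 : (0 < k)%N.

Lemma bi_proof (l : 'I_(n * k)) : (l %/ k < n)%N.
Proof. by rewrite ltn_divLR. Qed.
Definition bi (l : 'I_(n * k)) : 'I_n := Ordinal (bi_proof l).
Definition ba (l : 'I_(n * k)) : 'I_k := Ordinal (ltn_pmod l k0).

Lemma bi_blk i a : bi (blk i a) = i.
Proof.
apply: val_inj => /=; rewrite divnMDl // divn_small ?addn0 //.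
Qed.

Lemma ba_blk i a : ba (blk i a) = a.
Proof. by apply: val_inj => /=; rewrite modnMDl modn_small. Qed.

Lemma blk_bi_ba l : blk (bi l) (ba l) = l.
Proof. by apply: val_inj => /=; rewrite -divn_eq. Qed.

Lemma big_blk (R : Type) (idx : R) (op : Monoid.com_law idx) (F : 'I_(n * k) -> R) :
  \big[op/idx]_l F l = \big[op/idx]_(i < n) \big[op/idx]_(a < k) F (blk i a).
Proof.
rewrite pair_big /=.
rewrite (reindex (fun p : 'I_n * 'I_k => blk p.1 p.2)) //.
apply: onW_bij; exists (fun l => (bi l, ba l)).
  by case=> i a /=; rewrite bi_blk ba_blk.
by move=> l /=; rewrite blk_bi_ba.
Qed.

Lemma blk_inj (i j : 'I_n) (a b : 'I_k) : (blk i a == blk j b) = (i == j) && (a == b).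
Proof.
apply/eqP/andP => [e | [/eqP -> /eqP ->] //].
have := congr1 (@bi) e; have := congr1 (@ba) e.
by rewrite !bi_blk !ba_blk => -> ->.
Qed.

End Blk.


Section BlkMx.
Variables (C : numClosedFieldType) (n k : nat).
Hypothesis k0 : (0 < k)%N.

Local Notation bi := (bi k0).
Local Notation ba := (ba k0).

Lemma blk_matrixP (A B : 'M[C]_(n * k)) :
  (forall i a j b, A (blk i a) (blk j b) = B (blk i a) (blk j b)) -> A = B.
Proof.
move=> h; apply/matrixP => l m.
by rewrite -(blk_bi_ba k0 l) -(blk_bi_ba k0 m).
Qed.

Lemma sum_blk (F : 'I_(n * k) -> C) :
  \sum_l F l = \sum_(i < n) \sum_(a < k) F (blk i a).
Proof. exact: big_blk. Qed.

Lemma prod_blk (F : 'I_(n * k) -> C) :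
  \prod_l F l = \prod_(i < n) \prod_(a < k) F (blk i a).
Proof. exact: big_blk. Qed.

Lemma sum_only (i : 'I_n) (F : 'I_n -> C) :
  (forall j, j != i -> F j = 0) -> \sum_j F j = F i.
Proof.
move=> h; rewrite (bigD1 i) // big1 ?Monoid.simpm // => j /andP[_]; exact: h.
Qed.

Lemma mod_lt_same_div (l m : nat) :
  (l < m)%N -> (l %/ k = m %/ k)%N -> (l %% k < m %% k)%N.
Proof.
by move=> lm e; move: lm; rewrite {1}(divn_eq l k) {1}(divn_eq m k) e ltn_add2l.
Qed.

Definition bdiag (X : 'M[C]_k) : 'M[C]_(n * k) :=
  \matrix_(l, m) (if bi l == bi m then X (ba l) (ba m) else 0).

Lemma bdiagE X i a j b :
  bdiag X (blk i a) (blk j b) = if i == j then X a b else 0.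
Proof. by rewrite mxE !bi_blk !ba_blk. Qed.

Lemma sum_if1 (G : 'I_n -> C) i : \sum_j (if i == j then G j else 0) = G i.
Proof.
rewrite -big_mkcond /= (big_pred1 i) // => j; rewrite /= eq_sym //.
Qed.

Lemma bdiagM X Y : bdiag X *m bdiag Y = bdiag (X *m Y).
Proof.
apply: blk_matrixP => i a j b; rewrite mxE sum_blk bdiagE.
rewrite (eq_bigr (fun i' => if i == i' then
   \sum_c X a c * (if i == j then Y c b else 0) else 0)).
  rewrite sum_if1; case: eqP => _; last by rewrite big1 // => c _; rewrite mulr0.
  by rewrite mxE; apply: eq_bigr => c _.
move=> i' _; case: eqP => [e | ne].
  by subst i'; apply: eq_bigr => c _; rewrite !bdiagE eqxx.
by rewrite big1 // => c _; rewrite !bdiagE; case: eqP => [/ne //|_]; rewrite mul0r.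
Qed.


Lemma bdiag1 : bdiag 1%:M = 1%:M.
Proof.
apply: blk_matrixP => i a j b; rewrite bdiagE !mxE (blk_inj k0).
by case: eqP => //= _; rewrite mulr0n.
Qed.

Lemma det_bdiag X : \det (bdiag X) = \det X ^+ n.
Proof.
have [P Pu Pt] := Schur X k0.
have Punit := unitarymx_unit Pu.
have [T [Pt' XE dT]] : exists T, [/\ is_trig_mx T, X = invmx P *m T *m P &
    \det T = \det X].
  exists (P *m X *m invmx P); split.
  - by move: Pt; rewrite /similar_to /= conjumx.
  - by rewrite !mulmxA mulVmx // mul1mx mulmxKV.
  - by rewrite !det_mulmx mulrAC -det_mulmx mulmxV // det1 mul1r.
rewrite -dT XE -!bdiagM !det_mulmx mulrAC -det_mulmx bdiagM mulVmx // bdiag1 det1 mul1r.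
have trT : is_trig_mx (bdiag T).
  apply/is_trig_mxP => l m lm; rewrite mxE; case: eqP => // e.
  move/is_trig_mxP: Pt'; apply.
  have eq' : (l %/ k = m %/ k)%N by move/(congr1 val): e.
  by rewrite /=; apply: mod_lt_same_div.
rewrite det_trig // prod_blk.
rewrite (eq_bigr (fun _ => \det T)); first by rewrite prodr_const card_ord.
move=> i _; rewrite det_trig //; apply: eq_bigr => a _.
by rewrite mxE !bi_blk !ba_blk eqxx.
Qed.

Lemma tr_bdiagM X (H : 'M[C]_(n * k)) :
  \tr (bdiag X *m H) = \tr (X *m ptrace1 H).
Proof.
rewrite /mxtrace sum_blk.
rewrite (eq_bigr (fun i => \sum_a \sum_b X a b * H (blk i b) (blk i a))).
  rewrite exchange_big; apply: eq_bigr => a _; rewrite mxE.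
  rewrite exchange_big; apply: eq_bigr => b _; rewrite !mxE big_distrr //.
move=> i _; apply: eq_bigr => a _; rewrite mxE sum_blk.
rewrite (@sum_only i).
  by apply: eq_bigr => b _; rewrite bdiagE eqxx.
move=> j nji; rewrite big1 // => b _; rewrite bdiagE eq_sym.
by rewrite (negbTE nji) mul0r.
Qed.

Definition brow i (u : 'rV[C]_(n * k)) : 'rV[C]_k := \row_a u ord0 (blk i a).

Lemma qf_bdiag X u : qf (bdiag X) u = \sum_i qf X (brow i u).
Proof.
rewrite qfE sum_blk; apply: eq_bigr => i _.
rewrite qfE; apply: eq_bigr => a _; rewrite sum_blk.
rewrite (@sum_only i).
  by apply: eq_bigr => b _; rewrite bdiagE eqxx !mxE.
move=> j nji; rewrite big1 // => b _; rewrite bdiagE eq_sym.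
by rewrite (negbTE nji) mulr0 mul0r.
Qed.

Lemma brow_neq0 u : u != 0 -> exists i, brow i u != 0.
Proof.
move=> u0; apply/existsP; apply: contraR u0 => /existsPn h.
apply/eqP/rowP => l; rewrite -(blk_bi_ba k0 l).
by have /negPn/eqP/rowP/(_ (ba l)) := h (bi l); rewrite !mxE.
Qed.

Definition emb j (y : 'rV[C]_k) : 'rV[C]_(n * k) :=
  \row_l (if bi l == j then y ord0 (ba l) else 0).

Lemma embE j y i a : emb j y ord0 (blk i a) = if i == j then y ord0 a else 0.
Proof. by rewrite mxE bi_blk ba_blk. Qed.

Lemma emb_neq0 j y : y != 0 -> emb j y != 0.
Proof.
move=> y0; apply: contra y0 => /eqP e; apply/eqP/rowP => a.
by have := embE j y j a; rewrite e eqxx !mxE => <-.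
Qed.

Lemma qf_ptrace (H : 'M[C]_(n * k)) y :
  qf (ptrace1 H) y = \sum_j qf H (emb j y).
Proof.
rewrite qfE.
rewrite (eq_bigr (fun a => \sum_j \sum_b y ord0 a * H (blk j a) (blk j b) * (y ord0 b)^* )).
  rewrite exchange_big; apply: eq_bigr => j _; rewrite qfE sum_blk.
  rewrite (@sum_only j).
    apply: eq_bigr => a _; rewrite sum_blk (@sum_only j).
      by apply: eq_bigr => b _; rewrite !embE eqxx.
    move=> i nij; rewrite big1 // => b _; rewrite !embE (negbTE nij).
    by rewrite rmorph0 mulr0.
  move=> i nij; rewrite big1 // => a _; rewrite big1 // => l _.
  by rewrite -(blk_bi_ba k0 l) embE (negbTE nij) !mul0r.
move=> a _; rewrite exchange_big; apply: eq_bigr => b _; rewrite mxE.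
by rewrite mulr_sumr mulr_suml; apply: eq_bigr => j _.
Qed.

End BlkMx.


Lemma det0dim (R : comPzRingType) m (A : 'M[R]_m) : m = 0%N -> \det A = 1.
Proof. by move=> e; move: A; rewrite e => A; rewrite det_mx00. Qed.

Lemma main_pos (C : numClosedFieldType) (n k : nat) (c s : C)
  (H : 'M[C]_(n * k)) (npos : (0 < n)%N) (kpos : (0 < k)%N) :
  angle_cs c s ->
  (forall z, numrange H z -> sector c s z) ->
  c ^+ (n * k) * `|\det H| <= `|\det (ptrace1 H) / (n ^ k)%:R| ^+ n.
Proof.
move=> hcs hW.
have [cR [sR [c0 [s0 _]]]] := hcs.
have secH : forall u, u != 0 -> sector c s (qf H u).
  move=> u u0; have [r r0 hr] := qf_numrange hW u0.
  have r0' : 0 < r^-1 by rewrite invr_gt0.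
  have := sector_scale hr r0'.
  by rewrite mulrA mulVf ?mul1r // gt_eqF.
set G := (n%:R)^-1 *: ptrace1 H.
have n0C : (n%:R : C) != 0 by rewrite pnatr_eq0 -lt0n.
have PG : ptrace1 H = n%:R *: G by rewrite /G scalerA mulfV // scale1r.
have secG : forall y, y != 0 -> sector c s (qf G y).
  move=> y y0; rewrite qfZ (qf_ptrace kpos) mulrC.
  have : sector c s (\sum_j qf H (emb kpos j y)).
    by apply: sector_sum => // j; apply: secH; apply: emb_neq0.
  have n0' : 0 < (n%:R : C)^-1 by rewrite invr_gt0 ltr0n.
  by move/sector_scale => /(_ _ n0'); rewrite mulrC.
set T := (2%:R : C)^-1 *: (G + adjmx G).
have qfT : forall y, qf T y = 'Re (qf G y).
  by move=> y; rewrite qfZ qfD qf_adj ReE mulrC.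
have Tpos : forall y, y != 0 -> 0 < qf T y.
  by move=> y /secG []; rewrite qfT.
have Tnneg : forall y, 0 <= qf T y.
  move=> y; have [->|y0] := eqVneq y 0; first by rewrite qf0.
  exact/ltW/Tpos.
have Tunit : T \in unitmx.
  rewrite unitmxE unitfE; apply/negP => /det0P [v v0 vT].
  by have := Tpos v v0; rewrite /qf vT mul0mx mxE ltxx.
set Ti := invmx T.
have [mu [detM trM eigM]] := eig_decomp (Ti *m G).
have Remu : forall a, 'Re (mu a) = 1.
  move=> a; have /eigenvalueP [w wM w0] := eigM a.
  set u := w *m Ti.
  have uT : u *m T = w by rewrite /u mulmxKV.
  have u0 : u != 0 by apply: contra w0 => /eqP u0; rewrite -uT u0 mul0mx.
  have e : qf G u = mu a * qf T u.
    by apply: qf_eig; rewrite uT -wM /u mulmxA.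
  have qT := Tpos u u0; rewrite qfT in qT.
  have -> : mu a = qf G u / 'Re (qf G u).
    by rewrite -qfT e mulfK // gt_eqF // qfT.
  rewrite ReMr ?divff ?gt_eqF // rpredV; exact: Creal_Re.
have trTG : 'Re (\tr (Ti *m G)) = k%:R.
  rewrite trM raddf_sum (eq_bigr (fun _ => 1)) => [|a _]; last exact: Remu.
  by rewrite sumr_const card_ord.
have detTG : 1 <= `|\det (Ti *m G)|.
  rewrite detM normr_prod.
  apply: (le_trans (_ : 1 <= \prod_(a < k) (1 : C))); first by rewrite prodr_const expr1n.
  apply: ler_prod => a _; rewrite ler01 /=.
  by rewrite -(Remu a); exact: (leif_Re_Creal (mu a)).1.
have detTG' : `|\det T| <= `|\det G|.
  have e1 : `|\det T| * `|\det Ti| = 1.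
    by rewrite -normrM -det_mulmx mulmxV // det1 normr1.
  move: detTG; rewrite det_mulmx normrM => h1.
  rewrite -[X in X <= _]mulr1; apply: le_trans (ler_wpM2l (normr_ge0 _) h1) _.
  by rewrite mulrA e1 mul1r.
set D := bdiag n kpos T.
set Di := bdiag n kpos Ti.
have DDi : Di *m D = 1%:M by rewrite bdiagM mulVmx // bdiag1.
have [d [detN trN eigN]] := eig_decomp (Di *m H).
have secd : forall l, sector c s (d l).
  move=> l; have /eigenvalueP [w wN w0] := eigN l.
  set u := w *m Di.
  have uD : u *m D = w by rewrite /u -mulmxA DDi mulmx1.
  have u0 : u != 0 by apply: contra w0 => /eqP u0; rewrite -uD u0 mul0mx.
  have e : qf H u = d l * qf D u by apply: qf_eig; rewrite uD -wN /u mulmxA.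
  have qD : 0 < qf D u.
    rewrite qf_bdiag; have [i bi0] := brow_neq0 kpos u0.
    rewrite (bigD1 i) //=; apply: (lt_le_trans (Tpos _ bi0)).
    by rewrite lerDl sumr_ge0.
  have -> : d l = (qf D u)^-1 * qf H u by rewrite e mulrC mulfK // gt_eqF.
  by apply: sector_scale; [exact: secH | rewrite invr_gt0].
have trN' : 'Re (\tr (Di *m H)) = (n * k)%:R.
  rewrite tr_bdiagM PG -scalemxAr mxtraceZ ReMl ?realn // trTG natrM //.
have key : c ^+ (n * k) * `|\det (Di *m H)| <= 1.
  rewrite detN normr_prod.
  have -> : c ^+ (n * k) * \prod_l `|d l| = \prod_l (c * `|d l|).
    by rewrite big_split /= prodr_const card_ord.
  apply: (@le_trans _ _ (\prod_l 'Re (d l))).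
    apply: ler_prod => l _; apply/andP; split.
      by rewrite mulr_ge0 // ltW.
    exact: (sector_norm hcs (secd l)).
  have := @leif_AGM C 'I_(n * k) predT (fun l => 'Re (d l))
    (fun l _ => ltW (proj1 (secd l))).
  move=> [h _]; apply: (le_trans h).
  have -> : #|@predT 'I_(n * k)| = (n * k)%N by rewrite eq_cardT // size_enum_ord.
  have -> : \sum_(i in predT) 'Re (d i) = (n * k)%:R.
    by rewrite -trN' trN raddf_sum.
  rewrite mulfV ?expr1n // pnatr_eq0 -lt0n muln_gt0 npos kpos //.
have dDi : `|\det Di| * `|\det D| = 1.
  by rewrite -normrM -det_mulmx DDi det1 normr1.
have h1 : c ^+ (n * k) * `|\det H| <= `|\det D|.
  rewrite -[X in X <= _]mulr1 -dDi.
  have -> : c ^+ (n * k) * `|\det H| * (`|\det Di| * `|\det D|) =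
      (c ^+ (n * k) * `|\det (Di *m H)|) * `|\det D|.
    by rewrite det_mulmx normrM; ring.
  by rewrite -[X in _ <= X]mul1r; apply: ler_wpM2r => //; apply: normr_ge0.
apply: le_trans h1 _.
rewrite det_bdiag normrX.
have -> : \det (ptrace1 H) / (n ^ k)%:R = \det G.
  by rewrite /G detZ natrX exprVn mulrC.
by apply: lerXn2r => //; rewrite nnegrE normr_ge0.
Qed.

Unset Implicit Arguments.
Theorem theorem3p5 (C : numClosedFieldType) (n k : nat) (c s : C)
  (H : 'M[C]_(n * k)) :
  angle_cs c s ->
  (forall z, numrange H z -> sector c s z) ->
  c ^+ (n * k) * `|\det H| <= `|\det (ptrace1 H) / (n ^ k)%:R| ^+ n.
Proof.
move=> hcs hW.
case: (posnP n) => [n0 | npos].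
  subst n; rewrite expr0 [in c ^+ _]mul0n expr0 mul1r (det0dim H (mul0n k)).
  by rewrite normr1.
case: (posnP k) => [k0 | kpos].
  subst k.
  rewrite [in c ^+ _]muln0 expr0 mul1r (det0dim H (muln0 n)).
  by rewrite det_mx00 expn0 mulr1n divr1 normr1 expr1n.
exact: main_pos npos kpos hcs hW.
Qed.
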